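(* Let $\hat k\in K$, $\hat j\in M\cup\{0\}$, and let $\bar{\boldsymbol{\pi}}$ be an extreme point of $\mathcal{C}_{(\hat k,\hat j)}=\{\boldsymbol{\pi}\in\mathcal{C}:\alpha^{\hat j}_{\hat k}=1\}$. For $j\in M\cup\{0\}$ define $\mathcal{K}^j=\{k\in K:\bar\alpha^j_k>0\}\setminus\{\hat k\}$ if $j=\hat j$ and $\mathcal{K}^j=\{k\in K:\bar\alpha^j_k>0\}$ otherwise, and $\mathcal{T}^j=\{t\in T:\bar\beta^j_t>0\}$. Write $\Phi_{i,j}=\Phi_{i,j}(\bar{\boldsymbol{\pi}})$, $\Psi_j=\Psi_j(\bar{\boldsymbol{\pi}})$. Then: (a) $\bigcap_{j=0}^m\mathcal{T}^j=\emptyset$; (b) for each $i\in N$, $\bar\gamma^0_i=\max_{j\in M}(\Phi_{i,j})^+$, and $\bar\gamma^j_i=\bar\gamma^0_i-\Phi_{i,j}$ for all $j\in M$; (c) $\bar\theta_0=\max_{j\in M}(\Psi_j)^+$, and $\bar\theta_j=\bar\theta_0-\Psi_j$ for all $j\in M$; (d) there exist $U_1\subseteq\{(i,j)\in N\times M:\Phi_{i,j}=0\}$ and $U_2\subseteq\{j\in M:\Psi_j=0\}$ such that $$|U_1|+|U_2|\ \ge\ \sum_{j=0}^m\big(|\mathcal{K}^j|+|\mathcal{T}^j|\big)+\sum_{i=1}^n\mathbb{I}(\bar\gamma^0_i)-\sum_{i=1}^n\sum_{j=1}^m\mathbb{I}(\bar\gamma^0_i)\big(1-\mathbb{I}(\bar\gamma^j_i)\big)+\mathbb{I}(\bar\theta_0)-\sum_{j=1}^m\mathbb{I}(\bar\theta_0)\big(1-\mathbb{I}(\bar\theta_j)\big).$$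 Conversely, if $\bar{\boldsymbol{\pi}}$ has nonnegative $\bar{\boldsymbol{\alpha}}^j,\bar{\boldsymbol{\beta}}^j$ components, $\bar\alpha^{\hat j}_{\hat k}=1$, and its $\bar{\boldsymbol{\gamma}},\bar{\boldsymbol{\theta}}$ components are given by the formulas in (b) and (c), then $\bar{\boldsymbol{\pi}}\in\mathcal{C}_{(\hat k,\hat j)}$.
   Context: Let $N=\{1,\dots,n\}$, $M=\{1,\dots,m\}$, $K=\{1,\dots,\kappa\}$, $T=\{1,\dots,\tau\}$, with data $A^k\in\mathbb{R}^{m\times n}$ (entries $A^k_{j,i}$), $\mathbf{b}^k\in\mathbb{R}^n$, $\mathbf{c}^k\in\mathbb{R}^m$ (entries $c^k_j$), $d_k\in\mathbb{R}$ ($k\in K$), $E\in\mathbb{R}^{\tau\times n}$, $\mathbf{f}\in\mathbb{R}^\tau$. Vectors $\boldsymbol{\pi}=(\boldsymbol{\alpha}^0,\dots,\boldsymbol{\alpha}^m;\boldsymbol{\beta}^0,\dots,\boldsymbol{\beta}^m;\boldsymbol{\gamma}^0,\dots,\boldsymbol{\gamma}^m;\theta_0,\dots,\theta_m)\in\mathbb{R}^{(m+1)(\kappa+\tau+n+1)}$ with $\boldsymbol{\alpha}^j\in\mathbb{R}^\kappa$, $\boldsymbol{\beta}^j\in\mathbb{R}^\tau$, $\boldsymbol{\gamma}^j\in\mathbb{R}^n$, $\theta_j\in\mathbb{R}$. Define $\Phi_{i,j}(\boldsymbol{\pi})=\sum_{k=1}^\kappa\big((A^k_{j,i}+b^k_i)\alpha^j_k-b^k_i\alpha^0_k\big)+\sum_{t=1}^\tau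 E_{t,i}(\beta^j_t-\beta^0_t)$ for $i\in N,j\in M$, and $\Psi_j(\boldsymbol{\pi})=\sum_{k=1}^\kappa\big((c^k_j-d_k)\alpha^j_k+d_k\alpha^0_k\big)+\sum_{t=1}^\tau f_t(\beta^0_t-\beta^j_t)$ for $j\in M$. $\mathcal{C}$ is the set of all $\boldsymbol{\pi}\ge\mathbf{0}$ with $\Phi_{i,j}(\boldsymbol{\pi})+\gamma^j_i-\gamma^0_i=0$ for all $i\in N,j\in M$ and $\Psi_j(\boldsymbol{\pi})+\theta_j-\theta_0=0$ for all $j\in M$. $(a)^+=\max\{a,0\}$; $\mathbb{I}(a)=0$ if $a=0$ and $\mathbb{I}(a)=1$ otherwise. *)

(* Defs.v *)
From HB Require Import structures.
From mathcomp Require Import all_boot all_order all_algebra.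
Set Implicit Arguments. Unset Strict Implicit. Unset Printing Implicit Defensive.
Import Order.TTheory GRing.Theory Num.Theory.
Local Open Scope ring_scope.

(* Coordinates of pi = (alpha^0..alpha^m; beta^0..beta^m; gamma^0..gamma^m; theta_0..theta_m).
   Index j : 'I_m.+1 stands for j in M u {0} (ord0 = 0); an element j : 'I_m of M
   = {1..m} is embedded as jM j = lift ord0 j (i.e. value j+1). *)
Inductive coord (m kappa tau n : nat) : Type :=
| CA of 'I_m.+1 & 'I_kappa
| CB of 'I_m.+1 & 'I_tau
| CG of 'I_m.+1 & 'I_n
| CT of 'I_m.+1.
Arguments CA {m kappa tau n}.
Arguments CB {m kappa tau n}.
Arguments CG {m kappa tau n}.
Arguments CT {m kappa tau n}.

Section Defs.
Variables (R : realFieldType) (n m kappa tau : nat).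
Variables (A : 'I_kappa -> 'M[R]_(m, n)) (b : 'I_kappa -> 'rV[R]_n)
          (c : 'I_kappa -> 'rV[R]_m) (d : 'rV[R]_kappa)
          (E : 'M[R]_(tau, n)) (f : 'cV[R]_tau).

Definition pivec := coord m kappa tau n -> R.

Definition jM (j : 'I_m) : 'I_m.+1 := lift ord0 j.

Definition al (p : pivec) j k := p (CA j k).
Definition be (p : pivec) j t := p (CB j t).
Definition ga (p : pivec) j i := p (CG j i).
Definition th (p : pivec) j := p (CT j).

Definition Phi (p : pivec) (i : 'I_n) (j : 'I_m) : R :=
  \sum_(k < kappa) ((A k j i + b k ord0 i) * al p (jM j) k - b k ord0 i * al p ord0 k)
  + \sum_(t < tau) E t i * (be p (jM j) t - be p ord0 t).

Definition Psi (p : pivec) (j : 'I_m) : R :=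
  \sum_(k < kappa) ((c k ord0 j - d ord0 k) * al p (jM j) k + d ord0 k * al p ord0 k)
  + \sum_(t < tau) f t ord0 * (be p ord0 t - be p (jM j) t).

Definition inC (p : pivec) : Prop :=
  (forall x, 0 <= p x)
  /\ (forall i j, Phi p i j + ga p (jM j) i - ga p ord0 i = 0)
  /\ (forall j, Psi p j + th p (jM j) - th p ord0 = 0).

Definition inCkj (kh : 'I_kappa) (jh : 'I_m.+1) (p : pivec) : Prop :=
  inC p /\ al p jh kh = 1.

End Defs.

Definition extreme_point (R : realFieldType) (X : Type) (S : (X -> R) -> Prop)
    (p : X -> R) : Prop :=
  S p /\
  forall (x y : X -> R) (l : R), S x -> S y -> 0 < l < 1 ->
    (forall z, p z = l * x z + (1 - l) * y z) -> x = y.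

Definition pos_part (R : realFieldType) (a : R) : R := Num.max a 0.
Definition Ind (R : realFieldType) (a : R) : int := if a == 0 then 0 else 1.

(* Main.v *)
Require Import Defs.
From HB Require Import structures.
From mathcomp Require Import all_boot all_order all_algebra.
From mathcomp Require Import ring lra zify.
From Stdlib Require Import FunctionalExtensionality.
Import Order.TTheory GRing.Theory Num.Theory.
Local Open Scope ring_scope.
Set Implicit Arguments. Unset Strict Implicit.

Lemma fin_pos_min (R : realFieldType) (X : finType) (g : X -> R) :
  (forall s, 0 < g s) -> exists e, 0 < e /\ forall s, e <= g s.
Proof.
move=> gp.
have: forall r : seq X, exists e, 0 < e /\ forall s, s \in r -> e <= g s.
  elim=> [|a r [e [e0 He]]]; first by exists 1; split.
  exists (Num.min e (g a)); split; first by rewrite lt_min e0 gp.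
  move=> s; rewrite in_cons => /orP [/eqP ->|sr].
    by rewrite ge_min lexx orbT.
  by rewrite ge_min He.
case/(_ (enum X)) => e [e0 He]; exists e; split => // s; apply: He; by rewrite mem_enum.
Qed.

Lemma lin_sum (F : fieldType) (S Q I : Type) (L : (S -> F) -> Q -> F) :
  (forall x y a q, L (fun s => x s + a * y s) q = L x q + a * L y q) ->
  forall (r : seq I) (u : I -> F) (e : I -> S -> F) q,
  L (fun s => \sum_(i <- r) u i * e i s) q = \sum_(i <- r) u i * L (e i) q.
Proof.
move=> Hl.
have L0 : forall q, L (fun _ => 0) q = 0.
  move=> q; have := Hl (fun _ => 0) (fun _ => 0) 1 q.
  have -> : (fun _ : S => (0:F) + 1 * 0) = (fun _ => 0).
    by apply: functional_extensionality => s; rewrite mulr0 addr0.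
  rewrite mul1r => H; have := congr1 (fun z => z - L (fun _ => 0) q) H; by rewrite subrr addrK.
move=> r u e q; elim: r => [|a r IH].
  rewrite big_nil.
  have -> : (fun s => \sum_(i <- [::]) u i * e i s) = (fun _ => 0).
    by apply: functional_extensionality => s; rewrite big_nil.
  by rewrite L0.
have -> : (fun s => \sum_(i <- a :: r) u i * e i s) =
  (fun s => (fun s => \sum_(i <- r) u i * e i s) s + u a * e a s).
  by apply: functional_extensionality => s; rewrite big_cons addrC.
by rewrite Hl IH big_cons addrC.
Qed.

Lemma kernel_ex (F : fieldType) (S Q : finType) (D : {set S})
  (L : (S -> F) -> Q -> F) :
  (forall x y a q, L (fun s => x s + a * y s) q = L x q + a * L y q) ->
  (#|Q| < #|D|)%N ->
  exists x : S -> F, (exists s, x s != 0) /\ (forall s, s \notin D -> x s = 0)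
     /\ forall q, L x q = 0.
Proof.
move=> Hl HQD.
pose e (r : 'I_#|D|) := fun s : S => ((s == enum_val r) : nat)%:R : F.
pose Mx : 'M[F]_(#|D|, #|Q|) := \matrix_(r, q) L (e r) (enum_val q).
have : kermx Mx != 0.
  rewrite -mxrank_eq0 mxrank_ker -lt0n subn_gt0.
  exact: leq_ltn_trans (rank_leq_col Mx) HQD.
move=> Kn0.
have [r Hr] : exists r, row r (kermx Mx) != 0.
  case: (pickP (fun r => row r (kermx Mx) != 0)) => [r Hr|H0]; first by exists r.
  exfalso; move/eqP: Kn0; apply; apply/row_matrixP => r; rewrite row0.
  by apply/eqP; have := H0 r => /= /negbFE.
set w := row r (kermx Mx).
have wM : w *m Mx = 0 by rewrite /w -row_mul mulmx_ker row0.
have [r' Hr'] : exists r', w 0 r' != 0.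
  case: (pickP (fun r' => w 0 r' != 0)) => [r' H|H0]; first by exists r'.
  exfalso; move: Hr; rewrite -/w => /eqP; apply; apply/matrixP => i j;
  by rewrite (ord1 i); have := H0 j => /= /negbFE/eqP ->; rewrite mxE.
exists (fun s => \sum_(r'' < #|D|) w 0 r'' * e r'' s); split; [|split].
- exists (enum_val r'); rewrite (bigD1 r') //= big1 ?addr0.
    by rewrite /e eqxx mulr1.
  by move=> i Hi; rewrite /e (inj_eq enum_val_inj) eq_sym (negbTE Hi) mulr0.
- move=> s sD; apply: big1 => i _; rewrite /e.
  case: eqP => [Es|]; last by rewrite mulr0.
  by move: sD; rewrite Es enum_valP.
- move=> q; rewrite (lin_sum Hl).
  have [q' <-] : exists q' : 'I_#|Q|, enum_val q' = q.
    exists (enum_rank q); exact: enum_rankK.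
  move/matrixP: wM => /(_ 0 q'); rewrite !mxE => H; rewrite -[RHS]H.
  apply: eq_bigr => i _; by rewrite /Mx !mxE.
Qed.

Lemma sum_pair (I J : finType)
  (F : I * J -> nat) : (\sum_p F p = \sum_i \sum_j F (i, j))%N.
Proof. by rewrite pair_bigA; apply: eq_bigr => [[]]. Qed.

Lemma sum_sum (I J : finType) (F : I + J -> nat) :
  (\sum_s F s = \sum_i F (inl i) + \sum_j F (inr j))%N.
Proof. exact: big_sumType. Qed.

Lemma sum_splitN (I : finType) (F G : I -> nat) :
  (\sum_i (F i + G i) = \sum_i F i + \sum_i G i)%N.
Proof. exact: big_split. Qed.

Lemma card_sumE (T : finType) (P : pred T) :
  #|[set x | P x]| = (\sum_x (P x : nat))%N.
Proof.
rewrite -sum1_card; rewrite [LHS]big_mkcond; apply: eq_bigr => x _.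
by rewrite inE; case: (P x).
Qed.

Section Main.
Variables (R : realFieldType) (n m kappa tau : nat).
Variables (A : 'I_kappa -> 'M[R]_(m, n)) (b : 'I_kappa -> 'rV[R]_n)
          (c : 'I_kappa -> 'rV[R]_m) (d : 'rV[R]_kappa)
          (E : 'M[R]_(tau, n)) (f : 'cV[R]_tau)
          (kh : 'I_kappa) (jh : 'I_m.+1).

Notation pv := (pivec R n m kappa tau).

Lemma Phi_lin (x y : pv) a i j :
  Phi A b E (fun z => x z + a * y z) i j = Phi A b E x i j + a * Phi A b E y i j.
Proof.
rewrite /Phi /al /be mulrDr !mulr_sumr addrACA -!big_split /=.
by congr (_ + _); apply: eq_bigr => ? _; ring.
Qed.

Lemma Psi_lin (x y : pv) a j :
  Psi c d f (fun z => x z + a * y z) j = Psi c d f x j + a * Psi c d f y j.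
Proof.
rewrite /Psi /al /be mulrDr !mulr_sumr addrACA -!big_split /=.
by congr (_ + _); apply: eq_bigr => ? _; ring.
Qed.

Definition X : finType :=
  (('I_m.+1 * 'I_kappa + 'I_m.+1 * 'I_tau) + ('I_m.+1 * 'I_n + 'I_m.+1))%type.

Definition toc (s : X) : Defs.coord m kappa tau n :=
  match s with
  | inl (inl (j, k)) => CA j k
  | inl (inr (j, t)) => CB j t
  | inr (inl (j, i)) => CG j i
  | inr (inr j) => CT j
  end.

Definition ofc (z : Defs.coord m kappa tau n) : X :=
  match z with
  | CA j k => inl (inl (j, k))
  | CB j t => inl (inr (j, t))
  | CG j i => inr (inl (j, i))
  | CT j => inr (inr j)
  end.

Lemma tocK z : toc (ofc z) = z. Proof. by case: z. Qed.
Lemma ofcK s : ofc (toc s) = s. Proof. by case: s => [[[]|[]]|[[]|]]. Qed.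

Definition Lq (x : pv) (q : ('I_n * 'I_m + 'I_m)%type) : R :=
  match q with
  | inl (i, j) => Phi A b E x i j + ga x (jM j) i - ga x ord0 i
  | inr j => Psi c d f x j + th x (jM j) - th x ord0
  end.

Lemma Lq_lin (x y : pv) a q : Lq (fun z => x z + a * y z) q = Lq x q + a * Lq y q.
Proof.
case: q => [[i j]|j] /=; rewrite ?Phi_lin ?Psi_lin /ga /th; ring.
Qed.

Lemma inC_Lq (p : pv) : inC A b c d E f p <-> (forall z, 0 <= p z) /\ forall q, Lq p q = 0.
Proof.
split.
  by case=> [H0 [H1 H2]]; split => // [[[i j]|j]] /=.
by case=> H0 H1; split => //; split => [i j|j]; [exact: (H1 (inl (i, j))) | exact: (H1 (inr j))].
Qed.

Lemma no_pert (pb : pv) : extreme_point (inCkj A b c d E f kh jh) pb ->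
  forall dl : pv, (forall z, pb z = 0 -> dl z = 0) -> dl (CA jh kh) = 0 ->
  (forall q, Lq dl q = 0) -> forall z, dl z = 0.
Proof.
move=> [[/inC_Lq [pb0 pbL] pb1] Hext] dl dl0 dlk dlL.
pose g := (fun s : X =>
   if 0 < pb (toc s) then pb (toc s) / (`|dl (toc s)| + 1) else 1).
have gp : forall s, 0 < g s.
  by move=> s; rewrite /g; case: ifP => // H; rewrite divr_gt0 // ltr_wpDl.
have [e [e0 He]] := fin_pos_min gp.
have Hb : forall z, e * `|dl z| <= pb z.
  move=> z; have := He (ofc z); rewrite /g tocK.
  case: ifP => [Hp|Hp] Hez.
    have h1 : 0 < `|dl z| + 1 by rewrite ltr_wpDl.
    rewrite ler_pdivlMr // in Hez.
    apply: le_trans Hez; rewrite mulrDr mulr1 lerDl; exact: ltW.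
  have pz : pb z = 0.
    by apply/eqP; rewrite eq_le pb0 andbT leNgt Hp.
  by rewrite (dl0 _ pz) normr0 mulr0 pz.
have inp : forall a, `|a| <= e -> inCkj A b c d E f kh jh (fun z => pb z + a * dl z).
  move=> a ha; split; last by rewrite /al dlk mulr0 addr0.
  apply/inC_Lq; split; last by move=> q; rewrite Lq_lin pbL dlL mulr0 addr0.
  move=> z; have := Hb z.
  have : `|a * dl z| <= e * `|dl z| by rewrite normrM ler_wpM2r.
  move=> h1 h2; have h3 := le_trans h1 h2.
  have := ler_norm (- (a * dl z)); rewrite normrN => h4.
  lra.
have := Hext _ _ (1/2) (inp e _) (inp (- e) _).
have e0' : 0 <= e by exact: ltW.
rewrite normrN ger0_norm // => /(_ (lexx e) (lexx e)).
have h12 : 0 < (1 / 2 : R) < 1 by apply/andP; split; lra.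
move=> /(_ h12) H.
have : (forall z, pb z = 1/2 * (pb z + e * dl z) + (1 - 1/2) * (pb z + - e * dl z)).
  by move=> z; field.
move/H => Heq z.
have := congr1 (fun g => g z) Heq => /= h.
have h2 : e * dl z = 0 by move: h; rewrite mulNr; lra.
by move/eqP: h2; rewrite mulf_eq0 (gt_eqF e0) /= => /eqP.
Qed.


Lemma Phi_const (p : pv) i j : (forall j k, p (CA j k) = 0) ->
  (forall j t, p (CB j t) = p (CB ord0 t)) -> Phi A b E p i j = 0.
Proof.
move=> HA HB; rewrite /Phi /al /be !big1 ?addr0 // => x _.
  by rewrite HB subrr mulr0.
by rewrite !HA !mulr0 subrr.
Qed.

Lemma Psi_const (p : pv) j : (forall j k, p (CA j k) = 0) ->
  (forall j t, p (CB j t) = p (CB ord0 t)) -> Psi c d f p j = 0.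
Proof.
move=> HA HB; rewrite /Psi /al /be !big1 ?addr0 // => x _.
  by rewrite HB subrr mulr0.
by rewrite !HA !mulr0 addr0.
Qed.

Lemma ord_split (P : 'I_m.+1 -> Prop) : P ord0 -> (forall j : 'I_m, P (jM j)) -> forall j, P j.
Proof. move=> H0 H1 j; case: (unliftP ord0 j) => [j'|] ->; [exact: H1|exact: H0]. Qed.


Lemma card_supp (pb : pv) : (forall z, 0 <= pb z) ->
  #|[set s : X | (pb (toc s) != 0) && (s != ofc (CA jh kh))]| =
  (\sum_(j < m.+1) (#|[set k | (0 < al pb j k)%R && ((j != jh) || (k != kh))]|
                    + #|[set t | (0 < be pb j t)%R]|)
  + \sum_(j < m.+1) \sum_(i < n) (ga pb j i != 0%R) + \sum_(j < m.+1) (th pb j != 0%R))%N.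
Proof.
move=> pb0.
rewrite !card_sumE !sum_sum !sum_pair sum_splitN.
rewrite -!addnA; congr (_ + _)%N; [|congr (_ + _)%N; [|congr (_ + _)%N]].
- apply: eq_bigr => j _; rewrite card_sumE.
  apply: eq_bigr => k _; rewrite /= lt0r pb0 andbT /al.
  by rewrite -[inl (inl (j,k)) == _]/((j,k) == (jh,kh)) xpair_eqE negb_and.
- apply: eq_bigr => j _; rewrite card_sumE.
  by apply: eq_bigr => k _; rewrite /= lt0r pb0 andbT /be.
- apply: eq_bigr => j _.
  by apply: eq_bigr => k _; rewrite /= ?andbT /ga.
- by apply: eq_bigr => j _; rewrite /= ?andbT /th.
Qed.



End Main.

Lemma ident1 (R : realFieldType) (I : finType) (g0 : R) (g : I -> R) :
  ((#|[set j | (g0 == 0%R) && (g j == 0%R)]| + \sum_j (g j != 0%R : nat))%N%:Z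
   + \sum_j Ind g0 * (1 - Ind (g j)) = #|I|%:Z).
Proof.
rewrite card_sumE -sum_splitN.
rewrite (big_morph Posz PoszD (erefl _)) -big_split /=.
have -> : (#|I|%:Z = \sum_(j : I) 1)%R by rewrite sumr_const natz.
apply: eq_bigr => j _; rewrite /Ind.
by case: (g0 == 0); case: (g j == 0).
Qed.

Unset Implicit Arguments.
Set Strict Implicit.

Theorem mainTheorem5 (R : realFieldType) (n m kappa tau : nat)
    (A : 'I_kappa -> 'M[R]_(m, n)) (b : 'I_kappa -> 'rV[R]_n)
    (c : 'I_kappa -> 'rV[R]_m) (d : 'rV[R]_kappa)
    (E : 'M[R]_(tau, n)) (f : 'cV[R]_tau)
    (kh : 'I_kappa) (jh : 'I_m.+1) :
  (forall pb : pivec R n m kappa tau,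
     extreme_point (inCkj A b c d E f kh jh) pb ->
     let Kset (j : 'I_m.+1) : {set 'I_kappa} :=
       [set k | (0 < al pb j k) && ((j != jh) || (k != kh))] in
     let Tset (j : 'I_m.+1) : {set 'I_tau} := [set t | 0 < be pb j t] in
     (* (a) *)
     (\bigcap_(j < m.+1) Tset j = set0)
     (* (b) *)
     /\ (forall i : 'I_n,
           ga pb ord0 i = \big[Num.max/0]_(j < m) pos_part (Phi A b E pb i j)
           /\ forall j : 'I_m, ga pb (jM j) i = ga pb ord0 i - Phi A b E pb i j)
     (* (c) *)
     /\ (th pb ord0 = \big[Num.max/0]_(j < m) pos_part (Psi c d f pb j)
         /\ forall j : 'I_m, th pb (jM j) = th pb ord0 - Psi c d f pb j)
     (* (d) *)
     /\ (exists (U1 : {set 'I_n * 'I_m}) (U2 : {set 'I_m}),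
           U1 \subset [set ij | Phi A b E pb ij.1 ij.2 == 0]
           /\ U2 \subset [set j | Psi c d f pb j == 0]
           /\ ((\sum_(j < m.+1) (#|Kset j| + #|Tset j|)%:Z)
               + (\sum_(i < n) Ind (ga pb ord0 i))
               - (\sum_(i < n) \sum_(j < m)
                    Ind (ga pb ord0 i) * (1 - Ind (ga pb (jM j) i)))
               + Ind (th pb ord0)
               - (\sum_(j < m) Ind (th pb ord0) * (1 - Ind (th pb (jM j))))
               <= (#|U1| + #|U2|)%:Z)%R))
  /\
  (forall pb : pivec R n m kappa tau,
     (forall j k, 0 <= al pb j k) ->
     (forall j t, 0 <= be pb j t) ->
     al pb jh kh = 1 ->
     (forall i : 'I_n,
        ga pb ord0 i = \big[Num.max/0]_(j < m) pos_part (Phi A b E pb i j)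
        /\ forall j : 'I_m, ga pb (jM j) i = ga pb ord0 i - Phi A b E pb i j) ->
     (th pb ord0 = \big[Num.max/0]_(j < m) pos_part (Psi c d f pb j)
      /\ forall j : 'I_m, th pb (jM j) = th pb ord0 - Psi c d f pb j) ->
     inCkj A b c d E f kh jh pb).
Proof.
split; last first.
  move=> pb Hal Hbe H1 Hga [Hth0 Hth].
  split=> //; split; [|split].
  - case=> [j k|j t|j i|j]; [exact: Hal|exact: Hbe| |].
    + case: (unliftP ord0 j) => [j'|] ->.
        have [e0 ej] := Hga i; rewrite -[pb _]/(ga pb (jM j') i) ej e0 subr_ge0.
        apply: le_trans (le_bigmax _ _ j'); by rewrite /pos_part le_max lexx.
      by rewrite -[pb _]/(ga pb ord0 i) (Hga i).1 bigmax_ge_id.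
    + case: (unliftP ord0 j) => [j'|] ->.
        rewrite -[pb _]/(th pb (jM j')) Hth Hth0 subr_ge0.
        apply: le_trans (le_bigmax _ _ j'); by rewrite /pos_part le_max lexx.
      by rewrite -[pb _]/(th pb ord0) Hth0 bigmax_ge_id.
  - by move=> i j; rewrite (Hga i).2; ring.
  - by move=> j; rewrite Hth; ring.
move=> pb Hext Kset Tset.
have NP := no_pert Hext.
case: (Hext) => [[[pb0 [HPhi HPsi]] pb1] _].
have ga0 : forall j i, 0 <= ga pb j i by move=> j i; exact: pb0.
have th0 : forall j, 0 <= th pb j by move=> j; exact: pb0.
have Hga : forall i j, ga pb (jM j) i = ga pb ord0 i - Phi A b E pb i j.
  by move=> i j; have := HPhi i j; lra.
have Hth : forall j, th pb (jM j) = th pb ord0 - Psi c d f pb j.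
  by move=> j; have := HPsi j; lra.
have Hb : forall i, ga pb ord0 i = \big[Num.max/0]_(j < m) pos_part (Phi A b E pb i j).
  move=> i; apply/eqP; rewrite eq_le; apply/andP; split; last first.
    apply: bigmax_le; first exact: ga0.
    move=> j _; rewrite /pos_part ge_max ga0 andbT; have := ga0 (jM j) i; rewrite Hga; lra.
  rewrite leNgt; apply/negP => Hlt.
  pose dl : pivec R n m kappa tau := fun z => match z with CG _ i' => if i' == i then 1 else 0 | _ => 0 end.
  have : dl (CG ord0 i) = 0.
    apply: NP => //.
    - case=> // j i' /=; case: eqP => // -> Hz; exfalso.
      have Mpos : 0 <= \big[Num.max/0]_(j < m) pos_part (Phi A b E pb i j) by exact: bigmax_ge_id.
      case: (unliftP ord0 j) Hz => [j'|] -> Hz.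
        have := Hga i j'; rewrite -[ga _ _ _]/(pb _) Hz.
        have : Phi A b E pb i j' <= \big[Num.max/0]_(j < m) pos_part (Phi A b E pb i j).
          apply: le_trans (le_bigmax _ _ j'); by rewrite /pos_part le_max lexx.
        lra.
      move: Hlt; rewrite -[ga _ _ _]/(pb _) Hz; lra.
    - case=> [[i' j]|j] /=.
        rewrite Phi_const // /ga /=; lra.
      rewrite Psi_const // /th /=; lra.
  by rewrite /dl eqxx => /eqP; rewrite oner_eq0.
have Hc : th pb ord0 = \big[Num.max/0]_(j < m) pos_part (Psi c d f pb j).
  apply/eqP; rewrite eq_le; apply/andP; split; last first.
    apply: bigmax_le; first exact: th0.
    move=> j _; rewrite /pos_part ge_max th0 andbT; have := th0 (jM j); rewrite Hth; lra.
  rewrite leNgt; apply/negP => Hlt.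
  pose dl : pivec R n m kappa tau := fun z => match z with CT _ => 1 | _ => 0 end.
  have : dl (CT ord0) = 0.
    apply: NP => //.
    - case=> // j /= Hz; exfalso.
      have Mpos : 0 <= \big[Num.max/0]_(j < m) pos_part (Psi c d f pb j) by exact: bigmax_ge_id.
      case: (unliftP ord0 j) Hz => [j'|] -> Hz.
        have := Hth j'; rewrite -[th _ _]/(pb _) Hz.
        have : Psi c d f pb j' <= \big[Num.max/0]_(j < m) pos_part (Psi c d f pb j).
          apply: le_trans (le_bigmax _ _ j'); by rewrite /pos_part le_max lexx.
        lra.
      move: Hlt; rewrite -[th _ _]/(pb _) Hz; lra.
    - case=> [[i' j]|j] /=.
        rewrite Phi_const // /ga /=; lra.
      rewrite Psi_const // /th /=; lra.
  by rewrite /dl => /eqP; rewrite oner_eq0.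
split.
  apply/setP => t; rewrite inE; apply/negP => /bigcapP Ht.
  pose dl : pivec R n m kappa tau := fun z => match z with CB _ t' => if t' == t then 1 else 0 | _ => 0 end.
  have : dl (CB ord0 t) = 0.
    apply: NP => //.
    - case=> // j t' /=; case: eqP => // -> Hz; exfalso.
      have := Ht j isT; rewrite inE -[be _ _ _]/(pb _) Hz; lra.
    - case=> [[i' j]|j] /=.
        rewrite Phi_const // /ga /=; lra.
      rewrite Psi_const // /th /=; lra.
  by rewrite /dl eqxx => /eqP; rewrite oner_eq0.
split; first by move=> i; split => //; exact: Hga.
split; first by split => //; exact: Hth.
pose supp := [set s : X n m kappa tau | (pb (toc s) != 0) && (s != ofc (CA jh kh))].
have supp_le : (#|supp| <= n * m + m)%N.
  rewrite leqNgt; apply/negP => Hgt.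
  have HQ : (#|{: ('I_n * 'I_m + 'I_m)%type}| < #|supp|)%N.
    by rewrite card_sum card_prod !card_ord.
  pose L := fun (x : X n m kappa tau -> R) q => Lq A b c d E f (fun z => x (ofc z)) q.
  have Hl : forall x y a q, L (fun s => x s + a * y s) q = L x q + a * L y q.
    by move=> x y a q; rewrite /L Lq_lin.
  have [x [[s xs] [xout xL]]] := kernel_ex Hl HQ.
  have := NP (fun z => x (ofc z)) _ _ xL (toc s).
  rewrite ofcK => H; move/eqP: xs; apply; apply: H.
  - move=> z Hz; apply: xout; rewrite inE tocK Hz eqxx.
    done.
  - by apply: xout; rewrite inE eqxx andbF.
pose U1 := [set ij : 'I_n * 'I_m | (ga pb ord0 ij.1 == 0) && (ga pb (jM ij.2) ij.1 == 0)].
pose U2 := [set j : 'I_m | (th pb ord0 == 0) && (th pb (jM j) == 0)].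
exists U1, U2; split; [|split].
- apply/subsetP => -[i j]; rewrite !inE /= => /andP [/eqP h0 /eqP h1].
  by have := Hga i j; rewrite h0 h1 => h; apply/eqP; lra.
- apply/subsetP => j; rewrite !inE /= => /andP [/eqP h0 /eqP h1].
  by have := Hth j; rewrite h0 h1 => h; apply/eqP; lra.
have C : #|supp| = _ := card_supp kh jh pb0.
set SKn := (\sum_(j < m.+1) (#|Kset j| + #|Tset j|))%N.
set A0 := (\sum_(i < n) (ga pb ord0 i != 0%R : nat))%N.
set BB := (\sum_(i < n) \sum_(j < m) (ga pb (jM j) i != 0%R : nat))%N.
set c0 := (th pb ord0 != 0%R : nat).
set CC := (\sum_(j < m) (th pb (jM j) != 0%R : nat))%N.
have Bd : (SKn + A0 + BB + c0 + CC <= n * m + m)%N.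
  move: supp_le; rewrite C [X in (_ + X + _)%N]big_ord_recl [X in (_ + _ + X)%N]big_ord_recl.
  rewrite [X in (_ + (_ + X) + _)%N]exchange_big /=.
  rewrite -/SKn -/A0 -/c0 -/CC -/BB; lia.
have E1 : ((#|U1| + BB)%N%:Z + \sum_(i < n) \sum_(j < m) Ind (ga pb ord0 i) * (1 - Ind (ga pb (jM j) i))
           = (n * m)%N%:Z).
  have -> : (#|U1| + BB = \sum_i (#|[set j | (ga pb ord0 i == 0%R) && (ga pb (jM j) i == 0%R)]|
               + \sum_j (ga pb (jM j) i != 0%R : nat)))%N.
    rewrite sum_splitN card_sumE sum_pair; congr (_ + _)%N.
    by apply: eq_bigr => i _; rewrite card_sumE.
  rewrite (big_morph Posz PoszD (erefl _)) -big_split /=.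
  rewrite (eq_bigr (fun _ => m%:Z)); last first.
    by move=> i _; rewrite (ident1 (ga pb ord0 i) (fun j => ga pb (jM j) i)) card_ord.
  by rewrite sumr_const card_ord -mulr_natr natz -PoszM mulnC.
have E2 := ident1 (th pb ord0) (fun j => th pb (jM j)).
rewrite card_ord -/CC -/U2 in E2.
have -> : (\sum_(j < m.+1) (#|Kset j| + #|Tset j|)%:Z = SKn%:Z)%R.
  by rewrite /SKn (big_morph Posz PoszD (erefl _)).
have -> : (\sum_(i < n) Ind (ga pb ord0 i) = A0%:Z)%R.
  rewrite /A0 (big_morph Posz PoszD (erefl _)); apply: eq_bigr => i _.
  by rewrite /Ind; case: (_ == 0).
move: E1 E2 Bd.
set GG := \sum_(i < n) _.
set TT := \sum_(j < m) _.
have -> : Ind (th pb ord0) = c0%:Z by rewrite /Ind /c0; case: (_ == 0).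
move: (n * m)%N #|U1| #|U2| => nm u1 u2.
clearbody GG TT SKn A0 BB c0 CC.
lia.
Qed.
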